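(* Let $\kappa=k_1k_2\cdots k_s$ where $k_1\le\cdots\le k_s$ are primes, and $\mathbb Z^\kappa=\mathbb Z_{k_1}\times\cdots\times\mathbb Z_{k_s}$. Consider the linear control network $\Sigma$ over $\mathbb Z^\kappa$: $Z(t+1)=AZ(t)+BU(t)$, $Y(t)=CZ(t)$, with $Z(t)\in(\mathbb Z^\kappa)^n$, $U(t)\in(\mathbb Z^\kappa)^m$, $Y(t)\in(\mathbb Z^\kappa)^p$, $A\in(\mathbb Z^\kappa)^{n\times n}$, $B\in(\mathbb Z^\kappa)^{n\times m}$, $C\in(\mathbb Z^\kappa)^{p\times n}$, all operations in $\mathbb Z^\kappa$. For $i\in[1,s]$ let $\Sigma_i$ be the linear control network over $\mathbb Z_{k_i}$: $X^i(t+1)=A^iX^i(t)+B^iU^i(t)$, $Y^i(t)=C^iX^i(t)$, where $A^i=\phi_i(A)$, $B^i=\phi_i(B)$, $C^i=\phi_i(C)$ (entrywise projections). Then $\Sigma=\Sigma_1\times\Sigma_2\times\cdots\times\Sigma_s$, and $\Sigma$ is controllable (respectively observable) if and only if every $\Sigma_i$, $i\in[1,s]$, is controllable (respectively observable).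
   Context: $\mathbb Z_p$ is the ring of integers modulo $p$; $\mathbb Z^\kappa$ has componentwise operations, and $\phi_i:\mathbb Z^\kappa\to\mathbb Z_{k_i}$ is the $i$-th coordinate projection. $\Sigma=\Sigma_1\times\cdots\times\Sigma_s$ means: for every initial state and control sequence of $\Sigma$, the $i$-th coordinate of the trajectory of $\Sigma$ equals the trajectory of $\Sigma_i$ started at the $i$-th coordinate of the initial state and driven by the $i$-th coordinates of the controls. Controllable means: for any initial state $z_0$ and target $z_d$ there exist $T\ge0$ and a control sequence steering $z_0$ to $z_d$ at time $T$. Observable means: any two distinct initial states can be distinguished by the outputs under some control sequence. *)

(* Defs.v *)
From HB Require Import structures.
From mathcomp Require Import all_boot all_order all_algebra.
Set Implicit Arguments. Unset Strict Implicit. Unset Printing Implicit Defensive.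
Import GRing.Theory.
Local Open Scope ring_scope.

Definition Zk (s : nat) (k : 'I_s -> nat) : Type := forall i : 'I_s, 'Z_(k i).

Section ZkOps.
Variables (s : nat) (k : 'I_s -> nat).
Definition zzero : Zk k := fun i => 0.
Definition zadd (x y : Zk k) : Zk k := fun i => x i + y i.
Definition zmul (x y : Zk k) : Zk k := fun i => x i * y i.

Definition zmulmx (p n q : nat) (A : 'M[Zk k]_(p, n)) (X : 'M[Zk k]_(n, q))
  : 'M[Zk k]_(p, q) :=
  \matrix_(r, c) \big[zadd/zzero]_(j < n) zmul (A r j) (X j c).
Definition zaddmx (p q : nat) (A B : 'M[Zk k]_(p, q)) : 'M[Zk k]_(p, q) :=
  \matrix_(r, c) zadd (A r c) (B r c).

Definition phi (i : 'I_s) (p q : nat) (A : 'M[Zk k]_(p, q)) : 'M['Z_(k i)]_(p, q) :=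
  \matrix_(r, c) A r c i.

Fixpoint ztraj (n m : nat) (A : 'M[Zk k]_n) (B : 'M[Zk k]_(n, m))
  (z0 : 'cV[Zk k]_n) (u : nat -> 'cV[Zk k]_m) (t : nat) : 'cV[Zk k]_n :=
  match t with
  | 0 => z0
  | t'.+1 => zaddmx (zmulmx A (ztraj A B z0 u t')) (zmulmx B (u t'))
  end.

Definition zcontrollable (n m : nat) (A : 'M[Zk k]_n) (B : 'M[Zk k]_(n, m)) :=
  forall z0 zd : 'cV[Zk k]_n, exists (T : nat) (u : nat -> 'cV[Zk k]_m),
    ztraj A B z0 u T = zd.

Definition zobservable (n m p : nat) (A : 'M[Zk k]_n) (B : 'M[Zk k]_(n, m))
  (C : 'M[Zk k]_(p, n)) :=
  forall z0 z1 : 'cV[Zk k]_n, z0 <> z1 ->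
    exists (u : nat -> 'cV[Zk k]_m) (t : nat),
      zmulmx C (ztraj A B z0 u t) <> zmulmx C (ztraj A B z1 u t).
End ZkOps.

Section RingNet.
Variable R : comNzRingType.
Fixpoint traj (n m : nat) (A : 'M[R]_n) (B : 'M[R]_(n, m))
  (x0 : 'cV[R]_n) (u : nat -> 'cV[R]_m) (t : nat) : 'cV[R]_n :=
  match t with
  | 0 => x0
  | t'.+1 => A *m traj A B x0 u t' + B *m u t'
  end.

Definition controllable (n m : nat) (A : 'M[R]_n) (B : 'M[R]_(n, m)) :=
  forall x0 xd : 'cV[R]_n, exists (T : nat) (u : nat -> 'cV[R]_m),
    traj A B x0 u T = xd.

Definition observable (n m p : nat) (A : 'M[R]_n) (B : 'M[R]_(n, m))
  (C : 'M[R]_(p, n)) :=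
  forall x0 x1 : 'cV[R]_n, x0 <> x1 ->
    exists (u : nat -> 'cV[R]_m) (t : nat),
      C *m traj A B x0 u t <> C *m traj A B x1 u t.
End RingNet.

(* Main.v *)
Require Import Defs.
From mathcomp Require Import all_boot all_order all_algebra.
From Stdlib Require Import Classical FunctionalExtensionality ClassicalEpsilon.
Set Implicit Arguments. Unset Strict Implicit. Unset Printing Implicit Defensive.
Import GRing.Theory.
Local Open Scope ring_scope.

Section Gen.
Variable R : comNzRingType.
Variables (n m : nat) (A : 'M[R]_n) (B : 'M[R]_(n, m)).

Lemma traj_lin x0 u t :
  traj A B x0 u t = traj A B x0 (fun _ => 0) t + traj A B 0 u t.
Proof.
elim: t => [|t IH] /=; first by rewrite addr0.
by rewrite IH mulmx0 addr0 mulmxDr addrA.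
Qed.

Lemma traj_shift x0 v d t :
  traj A B x0 v (d + t) = traj A B (traj A B x0 v d) (fun j => v (d + j)%N) t.
Proof.
elim: t => [|t IH] /=; first by rewrite addn0.
by rewrite addnS /= IH.
Qed.

Lemma traj_zero0 v d : (forall j, (j < d)%N -> v j = 0) -> traj A B 0 v d = 0.
Proof.
elim: d => [|d IH] H //=.
rewrite IH; last by move=> j hj; apply: H; apply: ltnW.
by rewrite H // !mulmx0 addr0.
Qed.

Definition shiftu (d : nat) (u : nat -> 'cV[R]_m) (j : nat) : 'cV[R]_m :=
  if (j < d)%N then 0 else u (j - d)%N.

Lemma traj_shiftu d u t : traj A B 0 (shiftu d u) (d + t) = traj A B 0 u t.
Proof.
rewrite traj_shift traj_zero0; last by move=> j hj; rewrite /shiftu hj.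
congr traj; apply: functional_extensionality => j.
by rewrite /shiftu ltnNge leq_addr /= addKn.
Qed.
End Gen.

Lemma ctrl_uniform (R : finComNzRingType) n m (A : 'M[R]_n) (B : 'M[R]_(n, m)) :
  controllable A B -> exists N, forall T, (N <= T)%N ->
    forall x0 xd, exists u, traj A B x0 u T = xd.
Proof.
move=> H.
have H0 : forall y : 'cV[R]_n, exists T, exists u, traj A B 0 u T = y by move=> y; apply: H.
pose Tf y := proj1_sig (constructive_indefinite_description _ (H0 y)).
have HT : forall y, exists u, traj A B 0 u (Tf y) = y.
  by move=> y; rewrite /Tf; case: constructive_indefinite_description.
exists (\max_(y : 'cV[R]_n) Tf y)%N => T hT x0 xd.
pose y := xd - traj A B x0 (fun _ => 0) T.
have [u hu] := HT y.
have hle : (Tf y <= T)%N by apply: leq_trans hT; apply: leq_bigmax.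
exists (shiftu (T - Tf y) u).
rewrite traj_lin.
have := traj_shiftu A B (T - Tf y) u (Tf y); rewrite subnK // => ->.
by rewrite hu /y addrC subrK.
Qed.

Section Z.
Variables (s : nat) (k : 'I_s -> nat).

Definition glue p q (f : forall i : 'I_s, 'M['Z_(k i)]_(p, q)) : 'M[Zk k]_(p, q) :=
  \matrix_(r, c) (fun i => f i r c).

Lemma phi_glue i p q (f : forall i : 'I_s, 'M['Z_(k i)]_(p, q)) : phi i (glue f) = f i.
Proof. by apply/matrixP => r c; rewrite !mxE. Qed.

Lemma phi_inj p q (M N : 'M[Zk k]_(p, q)) : (forall i, phi i M = phi i N) -> M = N.
Proof.
move=> H; apply/matrixP => r c; apply: functional_extensionality_dep => i.
by have := H i; move/matrixP/(_ r c); rewrite !mxE.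
Qed.

Lemma phi_neq p q (M N : 'M[Zk k]_(p, q)) : M <> N -> exists i, phi i M <> phi i N.
Proof.
move=> H; apply: NNPP => H'; apply: H; apply: phi_inj => i.
by apply: NNPP => H2; apply: H'; exists i.
Qed.

Definition liftc (i : 'I_s) p q (x : 'M['Z_(k i)]_(p, q)) (j : 'I_s) : 'M['Z_(k j)]_(p, q) :=
  match i =P j with
  | ReflectT e => eq_rect i (fun j => 'M['Z_(k j)]_(p, q)) x j e
  | ReflectF _ => 0 end.

Lemma liftc_id i p q (x : 'M['Z_(k i)]_(p, q)) : liftc x i = x.
Proof.
rewrite /liftc; case: (i =P i) => [e|//].
by have -> : e = erefl by apply: eq_irrelevance.
Qed.

Lemma liftc_ne i j p q (x : 'M['Z_(k i)]_(p, q)) : j <> i -> liftc x j = 0.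
Proof. by rewrite /liftc; case: (i =P j) => // e; move=> h; exfalso; apply: h. Qed.

Lemma big_app i (I : Type) (r : seq I) (P : pred I) (F : I -> Zk k) :
  (\big[@zadd s k/zzero k]_(j <- r | P j) F j) i = \sum_(j <- r | P j) F j i.
Proof. by elim/big_rec2: _ => // j y1 y2 _ <-. Qed.

Lemma phi_mul i a b c (M : 'M[Zk k]_(a, b)) (N : 'M[Zk k]_(b, c)) :
  phi i (zmulmx M N) = phi i M *m phi i N.
Proof.
apply/matrixP => r c'; rewrite !mxE big_app.
by apply: eq_bigr => j _; rewrite !mxE.
Qed.

Lemma phi_add i a b (M N : 'M[Zk k]_(a, b)) :
  phi i (zaddmx M N) = phi i M + phi i N.
Proof. by apply/matrixP => r c; rewrite !mxE. Qed.
End Z.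

Theorem proposition9p2 (s : nat) (k : 'I_s -> nat)
  (hprime : forall i : 'I_s, prime (k i))
  (hsorted : forall i j : 'I_s, (i <= j)%N -> (k i <= k j)%N)
  (n m p : nat) (A : 'M[Zk k]_n) (B : 'M[Zk k]_(n, m)) (C : 'M[Zk k]_(p, n)) :
  (* Sigma = Sigma_1 x ... x Sigma_s *)
  (forall (z0 : 'cV[Zk k]_n) (u : nat -> 'cV[Zk k]_m) (t : nat) (i : 'I_s),
      phi i (ztraj A B z0 u t)
        = traj (phi i A) (phi i B) (phi i z0) (fun t' => phi i (u t')) t
   /\ phi i (zmulmx C (ztraj A B z0 u t))
        = phi i C *m traj (phi i A) (phi i B) (phi i z0) (fun t' => phi i (u t')) t)
  /\ (zcontrollable A B <-> forall i : 'I_s, controllable (phi i A) (phi i B))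
  /\ (zobservable A B C <->
        forall i : 'I_s, observable (phi i A) (phi i B) (phi i C)).
Proof.
have P1 : forall (z0 : 'cV[Zk k]_n) (u : nat -> 'cV[Zk k]_m) (t : nat) (i : 'I_s),
      phi i (ztraj A B z0 u t)
        = traj (phi i A) (phi i B) (phi i z0) (fun t' => phi i (u t')) t.
  move=> z0 u t i; elim: t => [|t IH] //=.
  by rewrite phi_add !phi_mul IH.
split.
  by move=> z0 u t i; split; rewrite // phi_mul P1.
split.
  split.
    move=> H i x0 xd.
    have [T [u hu]] := H (glue (liftc x0)) (glue (liftc xd)).
    exists T, (fun t => phi i (u t)).
    by have := congr1 (@phi _ _ i _ _) hu; rewrite P1 !phi_glue !liftc_id.
  move=> H z0 zd.
  have HN : forall i, exists N, forall T, (N <= T)%N -> forall x0 xd,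
      exists u, traj (phi i A) (phi i B) x0 u T = xd.
    move=> i; exact: (@ctrl_uniform _ _ _ (phi i A) (phi i B) (H i)).
  pose N i := proj1_sig (constructive_indefinite_description _ (HN i)).
  have hN : forall i T, (N i <= T)%N -> forall x0 xd,
      exists u, traj (phi i A) (phi i B) x0 u T = xd.
    move=> i; exact: (proj2_sig (constructive_indefinite_description _ (HN i))).
  pose T := (\max_(i : 'I_s) N i)%N.
  have hU : forall i, exists u, traj (phi i A) (phi i B) (phi i z0) u T = phi i zd.
    by move=> i; apply: hN; apply: leq_bigmax.
  pose w i := proj1_sig (constructive_indefinite_description _ (hU i)).
  have hw : forall i, traj (phi i A) (phi i B) (phi i z0) (w i) T = phi i zd.
    move=> i; exact: (proj2_sig (constructive_indefinite_description _ (hU i))).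
  exists T, (fun t => glue (fun i => w i t)).
  apply: phi_inj => i; rewrite P1 -hw; congr traj.
  by apply: functional_extensionality => t; rewrite phi_glue.
split.
  move=> H i x0 x1 hne.
  have hz : glue (liftc x0) <> glue (liftc x1).
    by move=> e; apply: hne; have := congr1 (@phi _ _ i _ _) e; rewrite !phi_glue !liftc_id.
  have [u [t ht]] := H _ _ hz.
  have [j hj] := phi_neq ht.
  rewrite !phi_mul !P1 !phi_glue in hj.
  case: (eqVneq j i) => [eji|nji].
    subst j; rewrite !liftc_id in hj.
    by exists (fun t => phi i (u t)), t.
  by exfalso; apply: hj; rewrite !liftc_ne //; apply/eqP.
move=> H z0 z1 hne.
have [i hi] := phi_neq hne.
have HU : forall j, exists u : nat -> 'cV['Z_(k j)]_m, phi j z0 <> phi j z1 ->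
   exists t, phi j C *m traj (phi j A) (phi j B) (phi j z0) u t
          <> phi j C *m traj (phi j A) (phi j B) (phi j z1) u t.
  move=> j; case: (classic (phi j z0 = phi j z1)) => h.
    by exists (fun _ => 0).
  have [u [t ht]] := H j _ _ h.
  by exists u => _; exists t.
pose w j := proj1_sig (constructive_indefinite_description _ (HU j)).
have hw : forall j, phi j z0 <> phi j z1 ->
   exists t, phi j C *m traj (phi j A) (phi j B) (phi j z0) (w j) t
          <> phi j C *m traj (phi j A) (phi j B) (phi j z1) (w j) t.
  move=> j; exact: (proj2_sig (constructive_indefinite_description _ (HU j))).
have [t ht] := hw i hi.
exists (fun t => glue (fun j => w j t)), t => e.
apply: ht; have := congr1 (@phi _ _ i _ _) e; rewrite !phi_mul !P1.
have -> : (fun t' => phi i (glue (fun j => w j t'))) = w i.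
  by apply: functional_extensionality => t'; rewrite phi_glue.
by [].
Qed.
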